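(* Let $p$ be a prime, $K\in\{\mathbb Z_{(p)},\mathbb Z_p\}$, $F$ a field containing $K$, $G=\langle a\rangle\cong C_{p^2}$, $\Phi(x)=x^{p-1}+\dots+x+1$, and let $U_0=KC_{p^2}\Phi(a)$ be the submodule of $KC_{p^2}$ generated by $\Phi(a)$. Then for every $1$-cocycle $T:C_{p^2}\to\widehat{U_0}$ the group $\mathrm{Crys}(C_{p^2};U_0;T)$ contains an element of order $p$.
   Context: $FM=F\otimes_KM$, $\widehat M=FM/M$ with $g(x+M)=gx+M$; a $1$-cocycle is $T:G\to\widehat M$ with $T(gh)=gT(h)+T(g)$. $\mathrm{Crys}(G;M;T)=\{(g,x):g\in G,\ x\in FM,\ x+M=T(g)\}$ with $(g,x)(g',x')=(gg',g'x+x')$. *)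

(* Defs.v *)
From mathcomp Require Import all_boot all_order all_algebra.
Set Implicit Arguments. Unset Strict Implicit. Unset Printing Implicit Defensive.
Import Order.TTheory GRing.Theory Num.Theory.
Local Open Scope ring_scope.

(* The cyclic group C_{p^2} = <a>, written additively: i : 'Z_(p^2) stands for a^i. *)
Notation Cp2 p := 'Z_(p ^ 2).

(* The group algebra F C_{p^2}: f i is the coefficient of a^i. *)
Definition grpalg (F : fieldType) (p : nat) := {ffun Cp2 p -> F}.

Definition gmul (F : fieldType) (p : nat) (f h : grpalg F p) : grpalg F p :=
  [ffun i => \sum_(j : Cp2 p) f j * h (i - j)].

(* action of the group element a^g : multiplication by a^g *)
Definition gact (F : fieldType) (p : nat) (g : Cp2 p) (f : grpalg F p) : grpalg F p :=
  [ffun i => f (i - g)].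

(* Phi(a) = 1 + a + ... + a^(p-1) *)
Definition Phi (F : fieldType) (p : nat) : grpalg F p :=
  [ffun i : Cp2 p => if (val i < p)%N then 1 else 0].

(* K is (the image in F of) Z_(p), the localization of Z at p; F has char 0 *)
Definition is_Zploc_sub (F : fieldType) (p : nat) (K : F -> Prop) : Prop :=
  [pchar F] =i pred0 /\
  forall x : F, K x <-> exists q : rat, ~~ (p %| absz (denq q))%N /\ x = ratr q.

(* p-adic integers as the inverse limit of Z/p^n Z: compatible residue sequences *)
Definition is_padic (p : nat) (x : nat -> int) : Prop :=
  forall n : nat, (0 <= x n < (p ^ n)%:Z) /\ ((x n.+1) %% (p ^ n)%:Z)%Z = x n.
Definition padd (p : nat) (x y : nat -> int) : nat -> int :=
  fun n => ((x n + y n) %% (p ^ n)%:Z)%Z.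
Definition pmul (p : nat) (x y : nat -> int) : nat -> int :=
  fun n => ((x n * y n) %% (p ^ n)%:Z)%Z.
Definition pone (p : nat) : nat -> int := fun n => (1 %% (p ^ n)%:Z)%Z.

Definition is_Zp_sub (F : fieldType) (p : nat) (K : F -> Prop) : Prop :=
  exists phi : (nat -> int) -> F,
    (forall x y, is_padic p x -> is_padic p y ->
       phi (padd p x y) = phi x + phi y /\ phi (pmul p x y) = phi x * phi y) /\
    phi (pone p) = 1 /\
    (forall x y, is_padic p x -> is_padic p y -> phi x = phi y -> x = y) /\
    (forall z : F, K z <-> exists x, is_padic p x /\ z = phi x).

Definition U0 (F : fieldType) (p : nat) (K : F -> Prop) (x : grpalg F p) : Prop :=
  exists r : grpalg F p, (forall i, K (r i)) /\ x = gmul r (Phi F p).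
Definition FU0 (F : fieldType) (p : nat) (x : grpalg F p) : Prop :=
  exists r : grpalg F p, x = gmul r (Phi F p).

(* A 1-cocycle T : G -> FU_0/U_0, given by a choice of representatives t g in FU_0
   (T g = t g + U_0); cocycle identity T(gh) = g T(h) + T(g) modulo U_0. *)
Definition cocycle_lift (F : fieldType) (p : nat) (K : F -> Prop)
  (t : Cp2 p -> grpalg F p) : Prop :=
  (forall g, FU0 (t g)) /\
  (forall g h, U0 K (t (g + h) - (gact g (t h) + t g))).

(* Crys(G; U_0; T) = {(g, x) : x in FU_0, x + U_0 = T(g)} *)
Definition in_crys (F : fieldType) (p : nat) (K : F -> Prop)
  (t : Cp2 p -> grpalg F p) (c : Cp2 p * grpalg F p) : Prop :=
  FU0 c.2 /\ U0 K (c.2 - t c.1).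

(* (g,x)(g',x') = (gg', g'x + x') ; identity is (1,0) = (0,0) additively *)
Definition crys_mul (F : fieldType) (p : nat) (c d : Cp2 p * grpalg F p)
  : Cp2 p * grpalg F p := (c.1 + d.1, gact d.1 c.2 + d.2).
Definition crys_pow (F : fieldType) (p : nat) (c : Cp2 p * grpalg F p) (n : nat)
  : Cp2 p * grpalg F p := iter n (fun d => crys_mul d c) (0, 0).

(* Main.v *)
Require Import Defs.
From mathcomp Require Import all_boot all_order all_algebra.
From mathcomp Require Import ring zify.
From Stdlib Require Import FunctionalExtensionality.
Set Implicit Arguments. Unset Strict Implicit. Unset Printing Implicit Defensive.
Import Order.TTheory GRing.Theory Num.Theory.
Local Open Scope ring_scope.

Section C0.
Variable F : fieldType.
Hypothesis c0 : [pchar F] =i pred0.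

Lemma intrF_neq0 (z : int) : z != 0 -> (z%:~R : F) != 0.
Proof.
have H := (proj1 (pcharf0P F)) c0.
case: z => n nz.
  by rewrite -pmulrn H; move: nz; rewrite eqz_nat.
by rewrite NegzE mulrNz oppr_eq0 -pmulrn H.
Qed.

Lemma ratr_frac (n d : int) : d != 0 -> @ratr F (n%:~R / d%:~R) = n%:~R / d%:~R.
Proof.
case: divqP => [_|k x kn0 _]; first by rewrite eqxx.
rewrite /ratr !rmorphM /=.
have hk := intrF_neq0 kn0.
have hd : ((denq x)%:~R : F) != 0 by apply: intrF_neq0; exact: denq_neq0.
by field; rewrite hk hd.
Qed.

Lemma ratrD (q1 q2 : rat) : @ratr F (q1 + q2) = @ratr F q1 + @ratr F q2.
Proof.
have h1 : (denq q1)%:~R != 0 :> rat by rewrite intr_eq0 denq_neq0.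
have h2 : (denq q2)%:~R != 0 :> rat by rewrite intr_eq0 denq_neq0.
have E : q1 + q2 = (numq q1 * denq q2 + numq q2 * denq q1)%:~R / (denq q1 * denq q2)%:~R.
  rewrite -{1}[q1]divq_num_den -{1}[q2]divq_num_den rmorphD !rmorphM /=.
  by field; rewrite h1 h2.
rewrite E ratr_frac; last by rewrite mulf_neq0 ?denq_neq0.
have g1 : ((denq q1)%:~R : F) != 0 by apply: intrF_neq0; exact: denq_neq0.
have g2 : ((denq q2)%:~R : F) != 0 by apply: intrF_neq0; exact: denq_neq0.
rewrite /ratr rmorphD !rmorphM /=.
by field; rewrite g1 g2.
Qed.

Lemma ratr0 : @ratr F 0 = 0.
Proof. by rewrite /ratr mul0r. Qed.
End C0.

Lemma denqD_dvd (q1 q2 : rat) : (denq (q1 + q2) %| denq q1 * denq q2)%Z.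
Proof.
have E : q1 + q2 = (numq q1 * denq q2 + numq q2 * denq q1)%:~R / (denq q1 * denq q2)%:~R.
  have h1 : (denq q1)%:~R != 0 :> rat by rewrite intr_eq0 denq_neq0.
  have h2 : (denq q2)%:~R != 0 :> rat by rewrite intr_eq0 denq_neq0.
  rewrite -{1}[q1]divq_num_den -{1}[q2]divq_num_den rmorphD !rmorphM /=.
  by field; rewrite h1 h2.
rewrite E; case: divqP => [_|k x _]; first exact: dvdz0.
exact: dvdz_mull.
Qed.

Lemma modz_dvd_aux (A c d : int) : ((A %% (c * d))%Z %% d)%Z = (A %% d)%Z.
Proof. by rewrite [in RHS](intdiv.divz_eq A (c * d)) mulrA modzMDl. Qed.

Lemma Kclosed (p : nat) (F : fieldType) (K : F -> Prop) :
  prime p -> (is_Zploc_sub p K \/ is_Zp_sub p K) ->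
  K 0 /\ (forall a b, K a -> K b -> K (a + b)).
Proof.
move=> pp [[c0 HK]|[phi [Hhom [_ [_ HK]]]]].
  split.
    apply/HK; exists 0; split; last by rewrite ratr0.
    have -> : denq 0 = 1 by [].
    by rewrite /= dvdn1; case: eqP pp => // ->.
  move=> a b /HK [q1 [n1 ->]] /HK [q2 [n2 ->]].
  apply/HK; exists (q1 + q2); split; last by rewrite ratrD.
  apply/negP => H; move: (dvdn_trans H (denqD_dvd q1 q2)).
  rewrite abszM Euclid_dvdM // => /orP [] ?.
    by move/negP: n1.
  by move/negP: n2.
have padP : forall x y, is_padic p x -> is_padic p y -> is_padic p (padd p x y).
  move=> x y Hx Hy n; rewrite /padd; split.
    rewrite modz_ge0 ?ltz_pmod //=.
      by rewrite ltz_nat expn_gt0 prime_gt0.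
    by rewrite eqz_nat expn_eq0 negb_and -lt0n prime_gt0.
  rewrite expnS PoszM modz_dvd_aux -modzDm (proj2 (Hx n)) (proj2 (Hy n)).
  done.
have z0 : is_padic p (fun _ => 0).
  move=> n; split; last by rewrite mod0z.
  by rewrite lexx ltz_nat expn_gt0 prime_gt0.
split.
  apply/HK; exists (fun _ => 0); split => //.
  have [e1 _] := Hhom _ _ z0 z0.
  have ez : padd p (fun _ : nat => 0) (fun _ => 0) = (fun _ => 0).
    by apply: functional_extensionality => n; rewrite /padd addr0 mod0z.
  rewrite ez in e1.
  by apply: (@addrI _ (phi (fun _ => 0))); rewrite addr0 -e1.
move=> a b /HK [x [Hx ->]] /HK [y [Hy ->]].
apply/HK; exists (padd p x y); split; first exact: padP.
by have [-> _] := Hhom _ _ Hx Hy.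
Qed.

Section Main.
Variables (p : nat) (F : fieldType).
Hypothesis pp : prime p.
Local Notation G := 'Z_(p ^ 2).

Lemma p_gt1 : (1 < p)%N. Proof. exact: prime_gt1. Qed.
Lemma p2_gt1 : (1 < p ^ 2)%N. Proof. have := p_gt1; rewrite -mulnn; nia. Qed.
Lemma valG (m : nat) : val (m%:R : G) = (m %% p ^ 2)%N. Proof. exact: val_Zp_nat p2_gt1 m. Qed.
Lemma valG_lt (x : G) : (val x < p * p)%N.
Proof. by apply: (leq_trans (ltn_ord x)); rewrite Zp_cast ?p2_gt1 // mulnn. Qed.
Lemma gpk (k : nat) : (p%:R : G) *+ k = (p * k)%:R.
Proof. by rewrite natrM mulr_natr. Qed.

Lemma claim (m : G) (k : nat) : (k < p)%N ->
  (val (m - (p%:R : G) *+ k)%R < p)%N = (k == val m %/ p)%N.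
Proof.
move=> kp; rewrite gpk.
have hm := valG_lt m.
have p0 : (0 < p)%N by rewrite prime_gt0.
apply/idP/eqP.
  move=> H.
  have Em : m = (val (m - (p * k)%:R) + p * k)%:R :> G by rewrite natrD natr_Zp subrK.
  have E2 : val m = (val (m - (p * k)%:R)%R + p * k)%N.
    rewrite {1}Em valG modn_small //.
    move: (val (m - (p * k)%:R)%R) H => y H; rewrite -mulnn; nia.
  move: E2 H; move: (val (m - (p * k)%:R)%R) => y E2 H.
  by rewrite E2 addnC mulnC divnMDl // (divn_small H) addn0.
move=> ->.
have Em : m = (val m %/ p * p + val m %% p)%:R :> G by rewrite -divn_eq natr_Zp.
rewrite {1}Em natrD mulnC addrAC subrr add0r valG modn_small; first exact: ltn_pmod.
have := ltn_pmod (val m) p0; move: (val m %% p)%N => y; have := p_gt1; rewrite -mulnn; nia.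
Qed.

Lemma PhiE (i : G) : Phi F p i = if (val i < p)%N then 1 else 0.
Proof. by rewrite /Phi ffunE. Qed.
Lemma gmulE (a b : grpalg F p) i : gmul a b i = \sum_j a j * b (i - j).
Proof. by rewrite /gmul ffunE. Qed.
Lemma gactE g (f : grpalg F p) i : gact g f i = f (i - g).
Proof. by rewrite /gact ffunE. Qed.
Lemma addfE (f g : grpalg F p) i : (f + g) i = f i + g i.
Proof. by rewrite ffunE. Qed.
Lemma subfE (f g : grpalg F p) i : (f - g) i = f i - g i.
Proof. by rewrite !ffunE. Qed.
Lemma zerofE i : (0 : grpalg F p) i = 0.
Proof. by rewrite ffunE. Qed.

Lemma comb (m : G) : \sum_(k < p) Phi F p (m - (p%:R : G) *+ k) = 1.
Proof.
have p0 : (0 < p)%N by rewrite prime_gt0.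
have qlt : (val m %/ p < p)%N by rewrite ltn_divLR // valG_lt.
rewrite (bigD1 (Ordinal qlt)) //= PhiE claim // eqxx big1 ?addr0 // => k /eqP neq.
rewrite PhiE claim //; case: eqP => // hk; exfalso; apply: neq; exact: val_inj.
Qed.

Lemma sum_gmul (w : grpalg F p) (i : G) :
  \sum_(k < p) gmul w (Phi F p) (i - (p%:R : G) *+ k) = \sum_j w j.
Proof.
under eq_bigr => k _ do rewrite gmulE.
rewrite exchange_big /=; apply: eq_bigr => j _.
rewrite -mulr_sumr -[RHS]mulr1; congr (_ * _).
rewrite -(comb (i - j)); apply: eq_bigr => k _.
by rewrite addrAC.
Qed.

Lemma gmulD (a b : grpalg F p) : gmul (a + b) (Phi F p) = gmul a (Phi F p) + gmul b (Phi F p).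
Proof.
apply/ffunP => i; rewrite addfE !gmulE -big_split; apply: eq_bigr => j _.
by rewrite addfE mulrDl.
Qed.

Lemma crys_powE (c : G * grpalg F p) n :
  crys_pow c n = (c.1 *+ n, [ffun i => \sum_(k < n) c.2 (i - c.1 *+ k)]).
Proof.
elim: n => [|n IH].
  rewrite /crys_pow /= mulr0n; congr pair; apply/ffunP => i.
  by rewrite zerofE ffunE big_ord0.
have -> : crys_pow c n.+1 = crys_mul (crys_pow c n) c by [].
rewrite IH /crys_mul /=; congr pair; first by rewrite mulrSr.
apply/ffunP => i; rewrite addfE gactE !ffunE big_ord_recl /= mulr0n subr0 addrC.
congr (_ + _); apply: eq_bigr => k _.
by rewrite /bump /= add1n mulrS opprD addrA.
Qed.

Lemma gpp : (p%:R : G) *+ p = 0.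
Proof. by apply: val_inj; rewrite gpk valG mulnn modnn. Qed.

End Main.

Theorem lemma11 (p : nat) (F : fieldType) (K : F -> Prop)
  (t : Cp2 p -> grpalg F p) :
  prime p ->
  (is_Zploc_sub p K \/ is_Zp_sub p K) ->
  cocycle_lift K t ->
  exists c : Cp2 p * grpalg F p,
    in_crys K t c /\ crys_pow c p = (0, 0) /\ c <> (0, 0).
Proof.
move=> pp HK [FU cocy].
have [K0 KD] := Kclosed pp HK.
pose gp : 'Z_(p ^ 2) := p%:R.
have [r Er] := FU gp.
have tele : forall n, exists S : grpalg F p, (forall i, K (S i)) /\
   forall i, t (gp *+ n) i - t 0 i - \sum_(k < n) t gp (i - gp *+ k)
             = gmul S (Phi F p) i.
  elim=> [|n [S [KS HS]]].
    exists 0; split => [i|i]; first by rewrite zerofE.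
    rewrite mulr0n big_ord0 subrr subr0 gmulE big1 // => j _.
    by rewrite zerofE mul0r.
  have [s [Ks Es]] := cocy (gp *+ n) gp.
  exists (S + s); split => [i|i]; first by rewrite addfE; apply: KD.
  have Ei := congr1 (fun f : grpalg F p => f i) Es.
  rewrite /= subfE addfE gactE in Ei.
  rewrite gmulD addfE -HS -Ei big_ord_recr /= mulrSr.
  ring.
have [S [KS HS]] := tele p.
have H0 := HS 0.
rewrite gpp // subrr add0r in H0.
rewrite Er in H0.
rewrite sum_gmul // gmulE in H0.
pose v : grpalg F p := [ffun j => S j * Phi F p (0 - j)].
have Kv : forall j, K (v j).
  move=> j; rewrite ffunE PhiE; case: ifP => _; first by rewrite mulr1.
  by rewrite mulr0.
have Sv : \sum_j v j = - \sum_j r j.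
  by rewrite H0; apply: eq_bigr => j _; rewrite ffunE.
exists (gp, gmul (r + v) (Phi F p)); split; [|split].
- split; first by exists (r + v).
  exists v; split => //=.
  by rewrite Er gmulD addrAC subrr add0r.
- rewrite crys_powE /= gpp //; congr pair; apply/ffunP => i.
  rewrite ffunE sum_gmul // zerofE.
  under eq_bigr => j _ do rewrite addfE.
  by rewrite big_split /= Sv subrr.
- case=> h _.
  have := congr1 val h; rewrite /= valG //.
  rewrite modn_small; first by move=> hp; move: (prime_gt0 pp); rewrite hp.
  have := prime_gt1 pp; rewrite -mulnn; nia.
Qed.
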